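(* The relation $\{(\rho,\pi):\rho=[n]\text{ for some }n\ge1\text{ and }n\text{ is a part of }\pi\}$ is $\Pi_2$-definable in $\mathbf Y^*=\langle\mathcal P,\le,[1]+[1]\rangle$.
   Context: $\mathcal P$ is the set of all integer partitions, including the empty partition; a partition is a nonincreasing finite sequence of positive integers (its parts). $[n]$ denotes the partition with a single part $n$. Young's lattice $\mathbf Y=\langle\mathcal P,\le\rangle$ has $(s_1,\dots,s_r)\le(n_1,\dots,n_t)$ iff $r\le t$ and $s_i\le n_i$ for all $i\le r$; $\mathbf Y^*$ is $\mathbf Y$ with a constant symbol for the partition $[1]+[1]=(1,1)$. A relation is $\Pi_n$-definable if it is defined by a first-order formula in the language $\{\le,(1,1)\}$ in prenex form with $n$ alternating quantifier blocks, the outermost universal, and a quantifier-free matrix. *)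

(* Defs.v *)
From mathcomp Require Import all_boot.
Set Implicit Arguments. Unset Strict Implicit. Unset Printing Implicit Defensive.

Definition is_partition (s : seq nat) : bool :=
  sorted geq s && all (fun x => 0 < x) s.

Record partition := Partition { parts : seq nat; _ : is_partition parts }.

Definition young_le (p q : partition) : Prop :=
  size (parts p) <= size (parts q) /\
  forall i, i < size (parts p) -> nth 0 (parts p) i <= nth 0 (parts q) i.

(* The constant [1]+[1] = (1,1). *)
Lemma is_partition_11 : is_partition [:: 1; 1]. Proof. by []. Qed.
Definition part11 : partition := Partition is_partition_11.

Inductive term := TVar of nat | TConst.

Inductive qf :=
  | QLe of term & term
  | QEq of term & term
  | QNot of qf
  | QAnd of qf & qf
  | QOr of qf & qf.

Definition env := nat -> partition.

Definition eval_term (e : env) (t : term) : partition :=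
  match t with TVar x => e x | TConst => part11 end.

Fixpoint sat_qf (e : env) (f : qf) : Prop :=
  match f with
  | QLe a b => young_le (eval_term e a) (eval_term e b)
  | QEq a b => eval_term e a = eval_term e b
  | QNot g => ~ sat_qf e g
  | QAnd g h => sat_qf e g /\ sat_qf e h
  | QOr g h => sat_qf e g \/ sat_qf e h
  end.

Definition upd (e : env) (x : nat) (p : partition) : env :=
  fun y => if y == x then p else e y.

Fixpoint sat_forall (xs : seq nat) (e : env) (P : env -> Prop) : Prop :=
  match xs with
  | [::] => P e
  | x :: xs' => forall p : partition, sat_forall xs' (upd e x p) P
  end.

Fixpoint sat_exists (xs : seq nat) (e : env) (P : env -> Prop) : Prop :=
  match xs with
  | [::] => P e
  | x :: xs' => exists p : partition, sat_exists xs' (upd e x p) P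
  end.

Record pi2_formula := Pi2 { pi2_univ : seq nat; pi2_exist : seq nat; pi2_matrix : qf }.

Definition sat_pi2 (e : env) (f : pi2_formula) : Prop :=
  sat_forall (pi2_univ f) e
    (fun e1 => sat_exists (pi2_exist f) e1 (fun e2 => sat_qf e2 (pi2_matrix f))).

Definition pi2_definable2 (R : partition -> partition -> Prop) : Prop :=
  exists f : pi2_formula, forall e : env, sat_pi2 e f <-> R (e 0) (e 1).

Definition single_part_rel (rho pi : partition) : Prop :=
  exists n, 1 <= n /\ parts rho = [:: n] /\ n \in parts pi.

(* Main.v *)
Require Import Defs.
From mathcomp Require Import all_boot.
From mathcomp Require Import zify.
From Stdlib Require Import Classical.
Set Implicit Arguments. Unset Strict Implicit. Unset Printing Implicit Defensive.

Definition pn (p : Defs.partition) i := nth 0 (parts p) i.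

Lemma partP (p : Defs.partition) : is_partition (parts p).
Proof. by case: p. Qed.

Lemma pn_posE p i : (0 < pn p i) = (i < size (parts p)).
Proof.
rewrite /pn; have /andP[_ /all_nthP Hall] := partP p.
case: (ltnP i (size (parts p))) => hi.
  by rewrite (Hall 0 i hi).
by rewrite nth_default.
Qed.

Lemma pn_mono p i j : i <= j -> pn p j <= pn p i.
Proof.
move=> le_ij; have /andP[srt _] := partP p.
case: (ltnP j (size (parts p))) => hj.
  have hi : i < size (parts p) by apply: leq_ltn_trans hj.
  have tr : transitive geq by move=> x y z h1 h2; apply: leq_trans h2 h1.
  have rf : reflexive geq by move=> x; apply: leqnn.
  rewrite /pn; exact: (sorted_leq_nth tr rf 0 srt i j hi hj le_ij).
by rewrite /pn (nth_default 0 hj).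
Qed.

Lemma young_leE p q : young_le p q <-> forall i, pn p i <= pn q i.
Proof.
split.
  case=> hs hi i; case: (ltnP i (size (parts p))) => h; first exact: hi.
  by rewrite /pn (nth_default 0 h).
move=> H; split; last by move=> i _; apply: H.
rewrite leqNgt; apply/negP => hlt.
have := H (size (parts q)).
have -> : pn q (size (parts q)) = 0 by rewrite /pn nth_default.
by rewrite leqn0 => /eqP h0; move: hlt; rewrite -pn_posE h0.
Qed.

Lemma part_eq p q : (forall i, pn p i = pn q i) -> p = q.
Proof.
move=> H.
have E i : (i < size (parts p)) = (i < size (parts q)) by rewrite -!pn_posE H.
have Hs : size (parts p) = size (parts q).
  case: (ltngtP (size (parts p)) (size (parts q))) => // h.
  - by have := E (size (parts p)); rewrite h ltnn.
  - by have := E (size (parts q)); rewrite h ltnn.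
have Heq : parts p = parts q.
  by apply: (eq_from_nth (x0:=0) Hs) => i _; apply: H.
case: p q Heq {H E Hs} => s Hs [t Ht] /= Heq; subst t.
by rewrite (bool_irrelevance Hs Ht).
Qed.

Lemma rect_is_part a k : is_partition (nseq k a.+1).
Proof.
rewrite /is_partition all_nseq orbT andbT.
by elim: k => [|[|k] IH] //=; rewrite leqnn.
Qed.

Definition rect a k : Defs.partition := Partition (rect_is_part a k).

Lemma pn_rect a k i : pn (rect a k) i = if i < k then a.+1 else 0.
Proof. by rewrite /pn /= nth_nseq. Qed.

Lemma pn_K i : pn part11 i = if i < 2 then 1 else 0.
Proof. rewrite /pn /=; case: i => [|[|i]] //=; by rewrite nth_nil. Qed.

Lemma pn_size0 p i : size (parts p) <= i -> pn p i = 0.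
Proof. by move=> h; rewrite /pn nth_default. Qed.

Lemma row_of p : ~ young_le part11 p -> forall i, 0 < i -> pn p i = 0.
Proof.
move=> H i hi; apply/eqP; rewrite -leqn0 leqNgt; apply/negP => hp.
apply: H; apply/young_leE => j; rewrite pn_K.
case: ifP => // hj.
have h1 : 0 < pn p 1 by apply: leq_trans hp (pn_mono _ hi).
case: j hj => [|[|j]] // _.
by apply: leq_trans h1 (pn_mono _ _).
Qed.


Lemma K_rect : part11 = rect 0 2.
Proof. by apply: part_eq => i; rewrite pn_K pn_rect. Qed.

Lemma le_at p q i : young_le p q -> pn p i <= pn q i.
Proof. by move/young_leE. Qed.

Lemma rect_le a k q : young_le (rect a k) q <-> (0 < k -> a.+1 <= pn q k.-1).
Proof.
split.
  move=> H hk; have := le_at k.-1 H; rewrite pn_rect.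
  by have -> : k.-1 < k by lia.
move=> H; apply/young_leE => i; rewrite pn_rect; case: ifP => // hi.
apply: leq_trans (H _) (pn_mono _ _); lia.
Qed.

Lemma le_rect p a k : young_le p (rect a k) <-> (pn p 0 <= a.+1 /\ size (parts p) <= k).
Proof.
split.
  move=> H; split.
    have := le_at 0 H; rewrite pn_rect; case: ifP => //; lia.
  rewrite leqNgt; apply/negP => hk.
  have := le_at k H; rewrite pn_rect ltnn leqn0 => /eqP h0.
  by move: hk; rewrite -pn_posE h0.
case=> h0 hs; apply/young_leE => i; rewrite pn_rect.
case: (ltnP i (size (parts p))) => hi.
  have -> : i < k by lia.
  by apply: leq_trans (pn_mono _ _) h0.
by rewrite pn_size0.
Qed.

Lemma col_cmp a b : pn a 0 <= 1 -> size (parts a) <= size (parts b) -> young_le a b.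
Proof.
move=> h0 hs; apply/young_leE => i.
case: (ltnP i (size (parts a))) => hi; last by rewrite pn_size0.
have : 0 < pn b i by rewrite pn_posE; lia.
have := pn_mono a (leq0n i); lia.
Qed.

Lemma row_eq p q : ~ young_le part11 p -> ~ young_le part11 q -> pn p 0 = pn q 0 -> p = q.
Proof.
move=> hp hq h; apply: part_eq => -[|i] //.
by rewrite (row_of hp) // (row_of hq).
Qed.

Lemma pn_emptyE i : pn (rect 0 0) i = 0.
Proof. by rewrite pn_rect. Qed.

Lemma main_back (pi : Defs.partition) m (Hin : m.+1 \in parts pi) s1 s2 c1 c2 Y :
 (~ young_le part11 s1 /\ young_le (rect m 1) s1 /\ rect m 1 <> s1 /\
    forall t, young_le t s1 -> t <> s1 -> young_le t (rect m 1)) ->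
 (~ young_le part11 s2 /\ young_le s1 s2 /\ s1 <> s2) ->
 (forall a b, young_le a c2 -> young_le b c2 -> young_le a b \/ young_le b a) ->
 (young_le part11 c2 \/ young_le c2 part11) ->
 (forall t, young_le t c2 -> t <> c2 -> young_le t c1) ->
 ~ young_le s1 Y -> ~ young_le c2 Y ->
 (forall y, ~ young_le s2 y -> ~ young_le c1 y -> young_le y pi) ->
 young_le Y pi.
Proof.
move=> [K1 [r1 [rn1 t1]]] [K2 [s12 sn12]] ch2 KC2 c21 nsY ncY Hy.
have rs1 := row_of K1.
have a1 : m.+1 <= pn s1 0 by move/rect_le: r1; apply.
have a2 : pn s1 0 != m.+1.
  apply/eqP => h; apply: rn1; apply: part_eq => -[|i]; rewrite pn_rect //=.
  by rewrite rs1.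
have a3 : pn s1 0 <= m.+2.
  have E : (pn s1 0).-2.+1 = (pn s1 0).-1 by lia.
  have ht : young_le (rect (pn s1 0).-2 1) (rect m 1).
    apply: t1.
    - apply/young_leE => -[|i]; rewrite pn_rect /=; first by rewrite E; lia.
      by rewrite rs1.
    - move/(congr1 (fun p => pn p 0)); rewrite pn_rect /= E; lia.
  move: ht => /(le_at 0); rewrite !pn_rect /= E; lia.
have s1E : s1 = rect m.+1 1.
  apply: part_eq => -[|i]; rewrite pn_rect /=; first lia.
  by rewrite rs1.
subst s1.
have rs2 := row_of K2.
have b1 : m.+3 <= pn s2 0.
  have := le_at 0 s12; rewrite pn_rect /= => h.
  case: (ltngtP (pn s2 0) m.+2) => //; first lia.
  move=> h2; exfalso; apply: sn12; apply: part_eq => -[|i]; rewrite pn_rect //=.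
  by rewrite rs2.
have col2 : pn c2 0 <= 1.
  rewrite leqNgt; apply/negP => h2.
  case: (posnP (pn c2 1)) => h1.
  - case: KC2.
    + rewrite K_rect => /rect_le /(_ isT) /=; lia.
    + rewrite K_rect => /le_rect [] /=; lia.
  - have [] := ch2 (rect 1 1) part11.
    + by apply/rect_le.
    + by rewrite K_rect; apply/rect_le.
    + by rewrite K_rect => /le_rect []; rewrite pn_rect.
    + by rewrite K_rect => /rect_le /(_ isT) /=; rewrite pn_rect.
set j := size (parts c2).
have sY : size (parts Y) < j.
  rewrite ltnNge; apply/negP => h; apply: ncY; exact: col_cmp.
have nY0 : pn Y 0 <= m.+1.
  rewrite leqNgt; apply/negP => h; apply: nsY; apply/rect_le => _ /=; lia.
case: (leqP j 1) => hj.
  apply/young_leE => i; rewrite pn_size0 //; lia.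
have ct : young_le (rect 0 j.-1) c1.
  apply: c21.
  - apply: col_cmp; rewrite ?pn_rect ?size_nseq /=; try case: ifP => _ //; lia.
  - move/(congr1 (fun p => size (parts p))) => /=; rewrite size_nseq -/j; lia.
have c1p : 1 <= pn c1 j.-2.
  have := le_at j.-2 ct; rewrite pn_rect.
  have -> : j.-2 < j.-1 by lia.
  by [].
have hy : young_le (rect m.+1 j.-2) pi.
  apply: Hy.
  - move/(le_at 0); rewrite pn_rect; case: ifP => _; lia.
  - move/(le_at j.-2); rewrite pn_rect ltnn; lia.
have idxE := nth_index 0 Hin.
set idx := index m.+1 (parts pi) in idxE.
apply/young_leE => i.
case: (ltnP i (size (parts Y))) => hi; last by rewrite pn_size0.
have hY : pn Y i <= m.+1 by apply: leq_trans (pn_mono _ _) nY0.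
case: (leqP i idx) => hidx.
  apply: leq_trans hY _; rewrite -{1}idxE; exact: pn_mono.
exfalso.
have := le_at idx hy; rewrite pn_rect.
have -> : idx < j.-2 by lia.
rewrite /pn idxE; lia.
Qed.

Definition V i := TVar i.
Definition N1f := QOr (QLe TConst (V 2)) (QOr (QNot (QLe (V 0) (V 2))) (QOr (QEq (V 0) (V 2))
  (QAnd (QLe (V 7) (V 2)) (QAnd (QNot (QEq (V 7) (V 2))) (QNot (QLe (V 7) (V 0))))))).
Definition N2f := QOr (QLe TConst (V 3)) (QOr (QNot (QLe (V 2) (V 3))) (QEq (V 2) (V 3))).
Definition N3f := QOr (QAnd (QLe (V 10) (V 5)) (QAnd (QLe (V 11) (V 5))
   (QAnd (QNot (QLe (V 10) (V 11))) (QNot (QLe (V 11) (V 10))))))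
  (QAnd (QNot (QLe TConst (V 5))) (QNot (QLe (V 5) TConst))).
Definition N4f := QAnd (QLe (V 12) (V 5)) (QAnd (QNot (QEq (V 12) (V 5))) (QNot (QLe (V 12) (V 4)))).
Definition N5f := QOr (QLe (V 2) (V 6)) (QLe (V 5) (V 6)).
Definition N6f := QAnd (QNot (QLe (V 3) (V 13))) (QAnd (QNot (QLe (V 4) (V 13))) (QNot (QLe (V 13) (V 1)))).
Definition Cf := QLe (V 6) (V 1).
Definition Matf := QAnd (QNot (QLe TConst (V 0)))
  (QAnd (QAnd (QLe (V 14) (V 0)) (QNot (QEq (V 14) (V 0))))
   (QOr N1f (QOr N2f (QOr N3f (QOr N4f (QOr N5f (QOr N6f Cf))))))).
Definition F := Pi2 [:: 2; 3; 4; 5; 6] [:: 7; 10; 11; 12; 13; 14] Matf.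

Notation K := part11.
Notation "a <=Y b" := (young_le a b) (at level 70).

Definition N1 r s1 w7 := K <=Y s1 \/ ~ r <=Y s1 \/ r = s1 \/ (w7 <=Y s1 /\ w7 <> s1 /\ ~ w7 <=Y r).
Definition N2 s1 s2 := K <=Y s2 \/ ~ s1 <=Y s2 \/ s1 = s2.
Definition N3 c2 w10 w11 := (w10 <=Y c2 /\ w11 <=Y c2 /\ ~ w10 <=Y w11 /\ ~ w11 <=Y w10) \/
   (~ K <=Y c2 /\ ~ c2 <=Y K).
Definition N4 c1 c2 w12 := w12 <=Y c2 /\ w12 <> c2 /\ ~ w12 <=Y c1.
Definition N5 s1 c2 Y := s1 <=Y Y \/ c2 <=Y Y.
Definition N6 pi s2 c1 w13 := ~ s2 <=Y w13 /\ ~ c1 <=Y w13 /\ ~ w13 <=Y pi.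
Definition MatP r pi s1 s2 c1 c2 Y w7 w10 w11 w12 w13 w14 :=
  ~ K <=Y r /\ (w14 <=Y r /\ w14 <> r) /\
  (N1 r s1 w7 \/ N2 s1 s2 \/ N3 c2 w10 w11 \/ N4 c1 c2 w12 \/ N5 s1 c2 Y \/ N6 pi s2 c1 w13 \/ Y <=Y pi).

Lemma satF e : sat_pi2 e F <-> forall s1 s2 c1 c2 Y, exists w7 w10 w11 w12 w13 w14,
  MatP (e 0) (e 1) s1 s2 c1 c2 Y w7 w10 w11 w12 w13 w14.
Proof. exact: iff_refl. Qed.

Lemma row_rect r : ~ K <=Y r -> 0 < pn r 0 -> r = rect (pn r 0).-1 1.
Proof.
move=> hK h; apply: part_eq => -[|i]; rewrite pn_rect /=; first lia.
by rewrite (row_of hK).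
Qed.

Lemma fwd r pi : (forall s1 s2 c1 c2 Y, exists w7 w10 w11 w12 w13 w14,
  MatP r pi s1 s2 c1 c2 Y w7 w10 w11 w12 w13 w14) -> single_part_rel r pi.
Proof.
move=> H.
have [_ [_ [_ [_ [_ [w14 [Hrow [[Hw Hne] _]]]]]]]] := H r r r r r.
have rpos : 0 < pn r 0.
  rewrite lt0n; apply/negP => /eqP h0; apply: Hne; apply: part_eq => i.
  have := le_at i Hw; have := pn_mono r (leq0n i); rewrite h0; lia.
set m := (pn r 0).-1.
have rE : r = rect m 1 by exact: row_rect.
have Pex : exists i, pn pi i <= m.+1.
  by exists (size (parts pi)); rewrite pn_size0.
case: (ex_minnP Pex) => k Pk Pmin.
have Pbig i : i < k -> m.+2 <= pn pi i.
  move=> hi; rewrite ltnNge; apply/negP => h.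
  have := Pmin i h; lia.
have [w7 [w10 [w11 [w12 [w13 [w [_ [_ HD]]]]]]]] :=
  H (rect m.+1 1) (rect m.+2 1) (rect 0 k.+1) (rect 0 k.+2) (rect m k.+1).
move: HD; rewrite rE.
case=> [N|[N|[N|[N|[N|[N|N]]]]]]; [exfalso..|].
- case: N => [|[|[|]]].
  + by rewrite K_rect => /rect_le /(_ isT); rewrite pn_rect.
  + move=> hh; apply: hh; apply/le_rect; rewrite pn_rect /=; split => //; lia.
  + by move/(congr1 (fun p => pn p 0)); rewrite !pn_rect /=; lia.
  + case=> /le_rect [h0 hs] [hne hn]; apply: hn; apply/le_rect; split => //.
    rewrite leq_eqVlt in h0; case/orP: h0 => //= /eqP h0; exfalso; apply: hne.
    apply: part_eq => -[|i]; rewrite pn_rect //= pn_size0 //; lia.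
- case: N => [|[|]].
  + by rewrite K_rect => /rect_le /(_ isT); rewrite pn_rect.
  + move=> hh; apply: hh; apply/rect_le => _; rewrite pn_rect /=; lia.
  + by move/(congr1 (fun p => pn p 0)); rewrite !pn_rect /=; lia.
- case: N => [[h10 [h11 [n1 n2]]]|[nK _]].
  + move/le_rect: h10 => [a0 as_]; move/le_rect: h11 => [b0 bs].
    case: (leqP (size (parts w10)) (size (parts w11))) => hs.
    * by apply: n1; apply: col_cmp.
    * by apply: n2; apply: col_cmp => //; lia.
  + by apply: nK; rewrite K_rect; apply/rect_le => _; rewrite pn_rect.
- case: N => /le_rect [h0 hs] [hne hn]; apply: hn; apply/le_rect; split => //.
  rewrite leq_eqVlt in hs; case/orP: hs => // /eqP hs; exfalso; apply: hne.
  apply: part_eq => i; rewrite pn_rect.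
  case: ifP => hi; last by rewrite pn_size0 //; lia.
  have : 0 < pn w12 i by rewrite pn_posE; lia.
  have := pn_mono w12 (leq0n i); lia.
- case: N.
  + by move/rect_le => /(_ isT); rewrite pn_rect /=; lia.
  + by move/rect_le => /(_ isT); rewrite pn_rect ltnn.
- case: N => n2 [n1 n3]; apply: n3.
  have h0 : pn w13 0 <= m.+2.
    rewrite leqNgt; apply/negP => h; apply: n2; apply/rect_le => _ /=; lia.
  have hs : size (parts w13) <= k.
    rewrite leqNgt; apply/negP => h; apply: n1; apply/rect_le => _ /=.
    by rewrite pn_posE.
  apply/young_leE => i.
  case: (ltnP i (size (parts w13))) => hi; last by rewrite pn_size0.
  apply: leq_trans (pn_mono _ (leq0n i)) _; apply: leq_trans h0 (Pbig _ _); lia.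
- move/rect_le: N => /(_ isT) /= hk.
  exists m.+1; split => //; split.
    by [].
  have hks : k < size (parts pi) by rewrite -pn_posE; lia.
  have -> : m.+1 = nth 0 (parts pi) k by rewrite -/(pn pi k); lia.
  exact: mem_nth.
Qed.

Lemma bwd r pi : single_part_rel r pi -> (forall s1 s2 c1 c2 Y, exists w7 w10 w11 w12 w13 w14,
  MatP r pi s1 s2 c1 c2 Y w7 w10 w11 w12 w13 w14).
Proof.
case=> n [hn [hr hin]].
set m := n.-1.
have nE : n = m.+1 by rewrite /m; lia.
have rE : r = rect m 1.
  by apply: part_eq => -[|[|i]]; rewrite pn_rect /pn hr //= nE.
rewrite nE in hin; subst r => s1 s2 c1 c2 Y.
have Mk : forall w7 w10 w11 w12 w13,
   (N1 (rect m 1) s1 w7 \/ N2 s1 s2 \/ N3 c2 w10 w11 \/ N4 c1 c2 w12 \/ N5 s1 c2 Y \/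
    N6 pi s2 c1 w13 \/ Y <=Y pi) ->
   exists w7 w10 w11 w12 w13 w14, MatP (rect m 1) pi s1 s2 c1 c2 Y w7 w10 w11 w12 w13 w14.
  move=> w7 w10 w11 w12 w13 HD; exists w7, w10, w11, w12, w13, (rect 0 0).
  split; first by rewrite K_rect => /rect_le /(_ isT); rewrite pn_rect.
  split; last exact: HD. split.
    by apply/young_leE => i; rewrite pn_emptyE.
  by move/(congr1 (fun p => pn p 0)); rewrite !pn_rect.
pose d := rect m 1.
case: (classic (exists t, t <=Y s1 /\ t <> s1 /\ ~ t <=Y rect m 1)) => [[t Ht]|H1].
  by apply: (Mk t d d d d); left; right; right; right.
case: (classic (K <=Y s1 \/ ~ rect m 1 <=Y s1 \/ rect m 1 = s1)) => [H|H1'].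
  by apply: (Mk d d d d d); left; rewrite /N1; tauto.
case: (classic (N2 s1 s2)) => [H|H2].
  by apply: (Mk d d d d d); tauto.
case: (classic (exists a b, a <=Y c2 /\ b <=Y c2 /\ ~ a <=Y b /\ ~ b <=Y a)) =>
  [[a [b Hab]]|H3].
  by apply: (Mk d a b d d); right; right; left; left.
case: (classic (~ K <=Y c2 /\ ~ c2 <=Y K)) => [H|H3'].
  by apply: (Mk d d d d d); right; right; left; right.
case: (classic (exists t, N4 c1 c2 t)) => [[t Ht]|H4].
  by apply: (Mk d d d t d); tauto.
case: (classic (N5 s1 c2 Y)) => [H|H5].
  by apply: (Mk d d d d d); tauto.
case: (classic (exists y, N6 pi s2 c1 y)) => [[y Hy]|H6].
  by apply: (Mk d d d d y); tauto.
apply: (Mk d d d d d); right; right; right; right; right; right.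
apply: (@main_back pi m hin s1 s2 c1 c2 Y).
  split; first by apply: NNPP => h; apply: H1'; tauto.
  split; first by apply: NNPP => h; apply: H1'; right; left.
  split; first by move=> h; apply: H1'; right; right.
  move=> t ht hne; apply: NNPP => h; apply: H1; exists t; tauto.
- rewrite /N2 in H2; split; first tauto.
  split; last tauto.
  by apply: NNPP => h; apply: H2; right; left.
- move=> a b ha hb; apply: NNPP => h; apply: H3; exists a, b; tauto.
- apply: NNPP => h; apply: H3'; tauto.
- move=> t ht hne; apply: NNPP => h; apply: H4; exists t; rewrite /N4; tauto.
- by move=> h; apply: H5; left.
- by move=> h; apply: H5; right.
- move=> y h1 h2; apply: NNPP => h; apply: H6; exists y; rewrite /N6; tauto.
Qed.

Theorem proposition3p6 : pi2_definable2 single_part_rel.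
Proof.
exists F => e; rewrite satF; split; [exact: fwd | exact: bwd].
Qed.
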